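(* Let $T$ be a binary tree rooted at $O$. Consider the stochastic search game on $T$ in which every edge has activation probability $p$. There exists $p_0\in(0,1)$ (depending on $T$) such that for all $p\in[p_0,1]$ the following hold. - For every leaf edge $e$, the expected time for the biased depth-first strategy $\sigma_\alpha$ to traverse $e$ is $\frac12\tau(O)+\Lambda(O)$. - Consequently, $\mathrm{val}(p)\le \frac12\tau(O)+\Lambda(O)$.
   Context: Setting: the stochastic search game on a finite tree $T$ rooted at $O$. Every edge has length $1$ and is active at each stage independently with the same probability $p\in(0,1]$. The hider picks an edge and stays there. The searcher, starting at $O$ and observing which edges are currently active, at each stage either waits or traverses an active edge incident to her position. The hider's payoff is the expected first time the searcher traverses his edge. $\mathrm{val}(p)$ is the value. Orient the edges away from $O$. For a vertex $v$, $T_v$ is the subtree rooted at $v$ consisting of all edges below $v$. For an edge $e=(u,w)$, $T_e$ is $\{e\}\cup T_w$, rooted at $u$. A leaf edge is an edge whose head has no outgoing edge. $T$ is binary if every vertex has at most two outgoing edges. A depth-first strategy (DFS) acts as follows at the searcher's current vertex: - if some untraversed outgoing edge is active, traverse one of them (possibly chosen at random); - if all untraversed outgoing edges are inactive, wait; - if all outgoing edges have been traversed, traverse the edge back toward $O$ if it is active, and wait otherwise. Cycle time: for a vertex or edge $z$, $\tau(z)$ is the expected time for a DFS on $T_z$, started at its root, to traverse every edge of $T_z$ and return to the root. It does not depend on the DFS. Equivalently, for binary trees: - $\tau(v)=0$ if $v$ has no outgoing edge; - $\tau(e)=\tau(w)+2/p$ for $e=(u,w)$; - $\tau(v)=\tau(e)$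 if $v$ has exactly one outgoing edge $e$; - $\tau(v)=\tau(w_1)+\tau(w_2)+3/p+1/(1-(1-p)^2)$ if $v$ has outgoing edges to $w_1,w_2$. The function $\Lambda$ is defined recursively on rooted binary trees. Write $\Lambda(v)=\Lambda(T_v)$ and $\Lambda(e)=\Lambda(T_e)$. - $\Lambda(v)=0$ if $v$ has no outgoing edge. - If the root $r$ has a single outgoing edge $e=(r,w)$, then $\Lambda(r)=\Lambda(e)=\Lambda(w)$. - If $r$ has two outgoing edges $e_1=(r,w_1)$ and $e_2=(r,w_2)$, then $$\Lambda(r)=\frac{\tau(e_1)}{\tau(e_1)+\tau(e_2)}\Lambda(w_1)+\frac{\tau(e_2)}{\tau(e_1)+\tau(e_2)}\Lambda(w_2)+\frac12\Big(\frac1{1-(1-p)^2}-\frac1p\Big).$$ The biased depth-first strategy $\sigma_\alpha$ is the DFS that, at a vertex whose two outgoing edges $e_1,e_2$ are both untraversed and both active, takes $e_1$ with probability $\alpha(e_1)$ and $e_2$ with probability $\alpha(e_2)=1-\alpha(e_1)$, where $$\alpha(e_1)=\mathrm{proj}_{[0,1]}\Big(\frac12+\frac{\Lambda(e_1)-\Lambda(e_2)}{\tau(e_1)+\tau(e_2)}\cdot\frac{1-(1-p)^2}{p^2}\Big).$$ *)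

(* Defs.v *)
From Stdlib Require Import Reals Lra List.
Import ListNotations.
Open Scope R_scope.

Inductive btree : Type :=
| Leaf : btree
| Unary : btree -> btree
| Binary : btree -> btree -> btree.

(** Vertices are encoded by their path from the root O, written in REVERSE order
    (most recent step first): the root is [], the i-th child of v is (i :: v)
    (i = 0 for the unique / first child, i = 1 for the second child).
    An edge (u,w) is identified by its head w (a nonempty path); its tail is [tl w]. *)
Definition vertex := list nat.

Fixpoint edges_from (t : btree) (v : vertex) : list vertex :=
  match t with
  | Leaf => []
  | Unary t1 => (0%nat :: v) :: edges_from t1 (0%nat :: v)
  | Binary l r => (0%nat :: v) :: (1%nat :: v) ::
                  edges_from l (0%nat :: v) ++ edges_from r (1%nat :: v)
  end.

Definition edges (T : btree) : list vertex := edges_from T [].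

Definition is_leaf_edge (T : btree) (e : vertex) : Prop :=
  In e (edges T) /\ forall i : nat, ~ In (i :: e) (edges T).

Fixpoint subtree_fwd (t : btree) (path : list nat) : option btree :=
  match path with
  | [] => Some t
  | i :: ps =>
      match t, i with
      | Unary t1, O => subtree_fwd t1 ps
      | Binary l _, O => subtree_fwd l ps
      | Binary _ r, S O => subtree_fwd r ps
      | _, _ => None
      end
  end.
Definition subtree (T : btree) (v : vertex) : option btree := subtree_fwd T (rev v).

Fixpoint tau (p : R) (t : btree) : R :=
  match t with
  | Leaf => 0
  | Unary t1 => tau p t1 + 2 / p
  | Binary l r => tau p l + tau p r + 3 / p + 1 / (1 - (1 - p) ^ 2)
  end.

Definition tau_edge (p : R) (tw : btree) : R := tau p tw + 2 / p.

Fixpoint Lambda (p : R) (t : btree) : R :=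
  match t with
  | Leaf => 0
  | Unary t1 => Lambda p t1
  | Binary l r =>
      tau_edge p l / (tau_edge p l + tau_edge p r) * Lambda p l
      + tau_edge p r / (tau_edge p l + tau_edge p r) * Lambda p r
      + / 2 * (1 / (1 - (1 - p) ^ 2) - 1 / p)
  end.

Definition veq (a b : vertex) : bool :=
  if list_eq_dec Nat.eq_dec a b then true else false.
Definition memb (x : vertex) (l : list vertex) : bool := existsb (veq x) l.

(** An activation configuration: the list of currently active edges. *)
Definition config := list vertex.

Fixpoint subsets {A : Type} (l : list A) : list (list A) :=
  match l with
  | [] => [[]]
  | x :: l' => let s := subsets l' in map (cons x) s ++ s
  end.

Definition configs (T : btree) : list config := subsets (edges T).

Definition cfg_prob (p : R) (T : btree) (c : config) : R :=
  fold_right (fun e acc => (if memb e c then p else 1 - p) * acc) 1 (edges T).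

(** Action of the searcher at a stage: [None] = wait, [Some w] = traverse the
    edge joining the current vertex to the adjacent vertex w. *)
Definition action := option vertex.

Definition legal (T : btree) (v : vertex) (c : config) (a : action) : Prop :=
  match a with
  | None => True
  | Some w =>
      (exists i : nat, w = i :: v /\ In w (edges T) /\ In w c)
      \/ (exists i : nat, v = i :: w /\ In v (edges T) /\ In v c)
  end.

(** A history: list of (observed configuration, chosen action), most recent first. *)
Definition history := list (config * action).

Fixpoint pos (h : history) : vertex :=
  match h with
  | [] => []
  | (_, None) :: h' => pos h'
  | (_, Some w) :: _ => w
  end.

Definition traverses (v : vertex) (a : action) (e : vertex) : bool :=
  match a with
  | None => false
  | Some w => (veq v (tl e) && veq w e) || (veq v e && veq w (tl e))
  end.

Fixpoint hits (e : vertex) (h : history) : bool :=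
  match h with
  | [] => false
  | (_, a) :: h' => traverses (pos h') a e || hits e h'
  end.

(** A (behavioural, randomized) searcher strategy: given the past history and the
    currently observed configuration, a finitely supported distribution over
    actions, given as a list of (probability, action) pairs. *)
Definition strategy := history -> config -> list (R * action).

Definition sumR (l : list R) : R := fold_right Rplus 0 l.

Definition valid_strategy (T : btree) (s : strategy) : Prop :=
  forall (h : history) (c : config),
    (forall q a, In (q, a) (s h c) -> 0 <= q /\ legal T (pos h) c a)
    /\ sumR (map fst (s h c)) = 1.

Fixpoint hist_dist (p : R) (T : btree) (s : strategy) (n : nat) : list (R * history) :=
  match n with
  | O => [(1, [])]
  | S n' =>
      flat_map (fun wh : R * history =>
        let (w, h) := wh in
        flat_map (fun c : config =>
          map (fun qa : R * action =>
                 let (q, a) := qa in (w * cfg_prob p T c * q, (c, a) :: h))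
              (s h c))
          (configs T))
        (hist_dist p T s n')
  end.

Definition surv (p : R) (T : btree) (s : strategy) (e : vertex) (n : nat) : R :=
  sumR (map (fun wh : R * history => if hits e (snd wh) then 0 else fst wh)
            (hist_dist p T s n)).

(** The expected time (first stage at which e is traversed) equals x:
    E[T_e] = sum_{n >= 0} P(T_e > n) = x (in particular it is finite). *)
Definition expected_time_is (p : R) (T : btree) (s : strategy) (e : vertex) (x : R) : Prop :=
  infinite_sum (surv p T s e) x.

(** Upper value of the game is at most c: for every eps > 0 the searcher has a
    strategy whose expected time to find every possible hider edge is <= c + eps.
    (The value val(p), when it exists, is bounded by the upper value.) *)
Definition upper_value_le (p : R) (T : btree) (c : R) : Prop :=
  forall eps : R, eps > 0 ->
    exists s : strategy, valid_strategy T s /\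
      forall e, In e (edges T) ->
        exists x, expected_time_is p T s e x /\ x <= c + eps.

Definition proj01 (x : R) : R := Rmax 0 (Rmin 1 x).

Definition alpha (p : R) (l r : btree) : R :=
  proj01 (/ 2 + (Lambda p l - Lambda p r) / (tau_edge p l + tau_edge p r)
                 * ((1 - (1 - p) ^ 2) / p ^ 2)).

Definition traversed (T : btree) (h : history) (e : vertex) : bool := hits e h.

Definition sigma_alpha (p : R) (T : btree) : strategy :=
  fun h c =>
    let v := pos h in
    let out := filter (fun w => memb w (edges T)) [0%nat :: v; 1%nat :: v] in
    let untr := filter (fun w => negb (traversed T h w)) out in
    let act := filter (fun w => memb w c) untr in
    match act with
    | [w] => [(1, Some w)]
    | [w1; w2] =>
        let a := match subtree T v with
                 | Some (Binary l r) => alpha p l r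
                 | _ => / 2
                 end in
        [(a, Some w1); (1 - a, Some w2)]
    | _ :: _ => [(1, None)] (* impossible: at most two outgoing edges *)
    | [] =>
        match untr with
        | _ :: _ => [(1, None)]
        | [] =>
            match v with
            | [] => [(1, None)]
            | _ :: u => if memb v c then [(1, Some u)] else [(1, None)]
            end
        end
    end.

(* Main.v *)
Require Import Defs.
From Stdlib Require Import Reals Lra Lia List FunctionalExtensionality.
Import ListNotations.
Open Scope bool_scope.
Open Scope R_scope.

Lemma veq_true a b : veq a b = true <-> a = b.
Proof. unfold veq; destruct list_eq_dec; split; congruence. Qed.
Lemma veq_refl a : veq a a = true.
Proof. apply veq_true; auto. Qed.
Lemma veq_false a b : a <> b -> veq a b = false.
Proof. intros H; unfold veq; destruct list_eq_dec; congruence. Qed.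
Lemma veq_false_iff a b : veq a b = false <-> a <> b.
Proof. unfold veq; destruct list_eq_dec; split; congruence. Qed.

Lemma memb_In x l : memb x l = true <-> In x l.
Proof. unfold memb. rewrite existsb_exists. split.
  - intros [y [Hy H]]. apply veq_true in H; subst; auto.
  - intros H; exists x; split; auto; apply veq_refl. Qed.
Lemma memb_notIn x l : memb x l = false <-> ~ In x l.
Proof. rewrite <- memb_In. destruct (memb x l); split; congruence. Qed.
Lemma memb_cons x y l : memb x (y :: l) = veq x y || memb x l.
Proof. reflexivity. Qed.

Definition child (t : btree) (i : nat) : option btree :=
  match t, i with Unary s, O => Some s | Binary l _, O => Some l
  | Binary _ r, S O => Some r | _, _ => None end.

Lemma subtree_fwd_cons t i ps : subtree_fwd t (i :: ps) =
  match child t i with Some s => subtree_fwd s ps | None => None end.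
Proof. destruct t; simpl; auto; destruct i as [|[|]]; auto. Qed.

Lemma subtree_fwd_app t l1 l2 : subtree_fwd t (l1 ++ l2) =
  match subtree_fwd t l1 with Some s => subtree_fwd s l2 | None => None end.
Proof. revert t; induction l1 as [|i l1 IH]; intros t; cbn [app]; [destruct t; reflexivity|].
  rewrite !subtree_fwd_cons. destruct (child t i); auto. Qed.

Lemma subtree_nil T : subtree T [] = Some T.
Proof. destruct T; reflexivity. Qed.
Lemma subtree_fwd_nil T : subtree_fwd T [] = Some T.
Proof. destruct T; reflexivity. Qed.

Lemma subtree_cons T i v : subtree T (i :: v) =
  match subtree T v with Some s => child s i | None => None end.
Proof. unfold subtree. simpl. rewrite subtree_fwd_app.
  destruct (subtree_fwd T (rev v)) as [s|]; auto. rewrite subtree_fwd_cons.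
  destruct (child s i); auto. apply subtree_fwd_nil. Qed.

Lemma In_edges_from t v0 w : In w (edges_from t v0) <->
  exists i y s, w = i :: rev y ++ v0 /\ subtree_fwd t y = Some s /\ child s i <> None.
Proof.
  revert v0 w; induction t as [|t1 IH|l IHl r IHr]; intros v0 w; simpl.
  - split; [tauto|]. intros [i [y [s [_ [H1 H2]]]]].
    destruct y; simpl in H1. inversion H1; subst. destruct i; simpl in H2; congruence.
    discriminate.
  - split.
    + intros [H|H].
      * exists 0%nat, [], (Unary t1). simpl. split; auto. split; auto. discriminate.
      * apply IH in H. destruct H as [i [y [s [H1 [H2 H3]]]]].
        exists i, (0%nat :: y), s. simpl. rewrite <- app_assoc. simpl. auto.
    + intros [i [y [s [H1 [H2 H3]]]]]. destruct y as [|j y].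
      * simpl in H2. inversion H2; subst. left. destruct i; simpl in *; auto. congruence.
      * simpl in H2. destruct j; [|discriminate]. right. apply IH.
        exists i, y, s. simpl in H1. rewrite <- app_assoc in H1. auto.
  - split.
    + intros [H|[H|H]].
      * exists 0%nat, [], (Binary l r). simpl. split; auto. split; auto. discriminate.
      * exists 1%nat, [], (Binary l r). simpl. split; auto. split; auto. discriminate.
      * apply in_app_or in H. destruct H as [H|H].
        -- apply IHl in H. destruct H as [i [y [s [H1 [H2 H3]]]]].
           exists i, (0%nat :: y), s. simpl. rewrite <- app_assoc. simpl. auto.
        -- apply IHr in H. destruct H as [i [y [s [H1 [H2 H3]]]]].
           exists i, (1%nat :: y), s. simpl. rewrite <- app_assoc. simpl. auto.
    + intros [i [y [s [H1 [H2 H3]]]]]. destruct y as [|j y].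
      * simpl in H2. inversion H2; subst. destruct i as [|[|i]]; simpl in *; auto. congruence.
      * right; right. apply in_or_app. simpl in H1. rewrite <- app_assoc in H1. simpl in H1.
        destruct j as [|[|j]]; simpl in H2; [left|right|discriminate].
        -- apply IHl. exists i, y, s. auto.
        -- apply IHr. exists i, y, s. auto.
Qed.

Lemma In_edges T w : In w (edges T) <->
  exists i v s, w = i :: v /\ subtree T v = Some s /\ child s i <> None.
Proof.
  unfold edges. rewrite In_edges_from. split.
  - intros [i [y [s [H1 [H2 H3]]]]]. exists i, (rev y), s. rewrite app_nil_r in H1.
    unfold subtree. rewrite rev_involutive. auto.
  - intros [i [v [s [H1 [H2 H3]]]]]. exists i, (rev v), s. rewrite rev_involutive, app_nil_r. auto.
Qed.

Lemma In_edges_cons T i v : In (i :: v) (edges T) <->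
  exists s, subtree T v = Some s /\ child s i <> None.
Proof. rewrite In_edges. split.
  - intros [i' [v' [s [H1 H2]]]]. inversion H1; subst. eauto.
  - intros [s H]. exists i, v, s. auto. Qed.

Lemma nil_notin_edges T : ~ In [] (edges T).
Proof. rewrite In_edges. intros [i [v [s [H _]]]]. discriminate. Qed.

Lemma subtree_edge T w : In w (edges T) -> exists s, subtree T w = Some s.
Proof. intros H. apply In_edges in H. destruct H as [i [v [s [-> [H1 H2]]]]].
  rewrite subtree_cons, H1. destruct (child s i); eauto. congruence. Qed.

Lemma edges_from_suffix t v0 w : In w (edges_from t v0) -> exists x, w = x ++ v0 /\ x <> [].
Proof. intros H. apply In_edges_from in H. destruct H as [i [y [s [H _]]]].
  exists (i :: rev y). split; [auto|discriminate]. Qed.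

Lemma suffix_neq (x1 x2 v : list nat) a b : a <> b -> x1 ++ a :: v <> x2 ++ b :: v.
Proof.
  intros Hab H. assert (Hl : length x1 = length x2).
  { apply (f_equal (@length nat)) in H. rewrite !length_app in H. simpl in H. lia. }
  revert x2 H Hl; induction x1 as [|c x1 IH]; intros [|d x2] H Hl; simpl in *; try lia.
  - inversion H; auto.
  - inversion H; subst. eapply IH; eauto.
Qed.

Lemma NoDup_edges_from t v0 : NoDup (edges_from t v0).
Proof.
  revert v0; induction t as [|t1 IH|l IHl r IHr]; intros v0; simpl.
  - constructor.
  - constructor; auto. intros H. apply edges_from_suffix in H.
    destruct H as [x [H1 H2]]. apply (f_equal (@length nat)) in H1.
    rewrite length_app in H1. simpl in H1. destruct x; simpl in *; [congruence|lia].
  - assert (Hlen : forall t w v, In w (edges_from t v) -> (length w > length v)%nat).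
    { intros t w v H. apply edges_from_suffix in H. destruct H as [x [-> Hx]].
      rewrite length_app. destruct x; simpl; [congruence|lia]. }
    constructor.
    + intros [H|H]. discriminate. apply in_app_or in H.
      destruct H as [H|H]; apply Hlen in H; simpl in H; lia.
    + constructor.
      * intros H. apply in_app_or in H.
        destruct H as [H|H]; apply Hlen in H; simpl in H; lia.
      * apply NoDup_app; auto. intros a Ha Hb.
        apply edges_from_suffix in Ha. apply edges_from_suffix in Hb.
        destruct Ha as [x1 [H1 _]]. destruct Hb as [x2 [H2 _]]. subst.
        eapply (suffix_neq x1 x2 v0 0%nat 1%nat); auto.
Qed.

Lemma NoDup_edges T : NoDup (edges T).
Proof. apply NoDup_edges_from. Qed.

Lemma sumR_app l1 l2 : sumR (l1 ++ l2) = sumR l1 + sumR l2.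
Proof. induction l1; simpl; [lra|]. rewrite IHl1; lra. Qed.

Lemma sumR_map_scal {A} (f : A -> R) k l :
  sumR (map (fun x => k * f x) l) = k * sumR (map f l).
Proof. induction l; simpl; [lra|]. rewrite IHl; lra. Qed.

Lemma sumR_map_ext {A} (f g : A -> R) l : (forall x, In x l -> f x = g x) ->
  sumR (map f l) = sumR (map g l).
Proof. intros H. f_equal. apply map_ext_in. auto. Qed.

Lemma sumR_map_plus {A} (f g : A -> R) l :
  sumR (map (fun x => f x + g x) l) = sumR (map f l) + sumR (map g l).
Proof. induction l; simpl; [lra|]. rewrite IHl; lra. Qed.

Lemma sumR_flat_map {A B} (f : B -> R) (g : A -> list B) l :
  sumR (map f (flat_map g l)) = sumR (map (fun x => sumR (map f (g x))) l).
Proof. induction l; simpl; auto. rewrite map_app, sumR_app, IHl. auto. Qed.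

Lemma sumR_nonneg l : (forall x, In x l -> 0 <= x) -> 0 <= sumR l.
Proof. induction l; simpl; intros H; [lra|].
  assert (0 <= a) by auto. assert (0 <= sumR l) by auto. lra. Qed.

Lemma sumR_le l1 l2 : Forall2 Rle l1 l2 -> sumR l1 <= sumR l2.
Proof. induction 1; simpl; lra. Qed.

Lemma sumR_map_le {A} (f g : A -> R) l : (forall x, In x l -> f x <= g x) ->
  sumR (map f l) <= sumR (map g l).
Proof. induction l; simpl; intros H; [lra|].
  assert (f a <= g a) by auto. assert (sumR (map f l) <= sumR (map g l)) by auto. lra. Qed.

Lemma subsets_incl {A} (E : list A) c : In c (subsets E) -> incl c E.
Proof. revert c; induction E as [|x E IH]; simpl; intros c H.
  - destruct H as [<-|[]]. intros z [].
  - apply in_app_or in H. destruct H as [H|H].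
    + apply in_map_iff in H. destruct H as [c' [<- H]]. apply IH in H.
      intros z [<-|Hz]; [left|right]; auto.
    + apply IH in H. intros z Hz; right; auto.
Qed.

Section Ex.
Variable p : R.

Definition cfgE (E : list vertex) (c : config) : R :=
  fold_right (fun e acc => (if memb e c then p else 1 - p) * acc) 1 E.

Definition ExE (E : list vertex) (G : (vertex -> bool) -> R) : R :=
  sumR (map (fun c => cfgE E c * G (fun z => memb z c)) (subsets E)).

Lemma cfgE_ext E c1 c2 : (forall e, In e E -> memb e c1 = memb e c2) -> cfgE E c1 = cfgE E c2.
Proof. induction E as [|x E IH]; simpl; intros H; auto.
  rewrite H by auto. rewrite IH; auto. Qed.

Lemma memb_out x c E : incl c E -> ~ In x E -> memb x c = false.
Proof. intros H1 H2. apply memb_notIn. intros H; apply H2, H1, H. Qed.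

Lemma ExE_cons x E G : ~ In x E ->
  ExE (x :: E) G = p * ExE E (fun m => G (fun z => veq z x || m z)) + (1 - p) * ExE E G.
Proof.
  intros Hx. unfold ExE. simpl subsets. rewrite map_app, sumR_app, map_map.
  rewrite <- !sumR_map_scal. f_equal.
  - apply sumR_map_ext. intros c Hc. apply subsets_incl in Hc.
    cbn [cfgE fold_right]. fold (cfgE E (x :: c)). rewrite memb_cons, veq_refl. simpl.
    rewrite (cfgE_ext E (x :: c) c). lra.
    intros e He. rewrite memb_cons. rewrite veq_false; auto. intros ->; auto.
  - apply sumR_map_ext. intros c Hc. apply subsets_incl in Hc.
    simpl. rewrite (memb_out x c E); auto. lra.
Qed.

Lemma ExE_ext E G1 G2 :
  (forall m, (forall z, m z = true -> In z E) -> G1 m = G2 m) -> ExE E G1 = ExE E G2.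
Proof. intros H. unfold ExE. apply sumR_map_ext. intros c Hc. f_equal. apply H.
  intros z Hz. apply memb_In in Hz. apply (subsets_incl E c); auto. Qed.

Lemma ExE_const E G k : NoDup E -> (forall m, G m = k) -> ExE E G = k.
Proof.
  revert G; induction E as [|x E IH]; intros G HN HG.
  - unfold ExE. simpl. rewrite HG. lra.
  - inversion HN; subst. rewrite ExE_cons by auto. rewrite !IH; auto. lra.
Qed.

Definition upd (m : vertex -> bool) (x : vertex) (b : bool) : vertex -> bool :=
  fun z => if veq z x then b else m z.

Lemma ExE_split x E G : NoDup E -> In x E ->
  ExE E G = p * ExE E (fun m => G (upd m x true)) + (1 - p) * ExE E (fun m => G (upd m x false)).
Proof.
  revert G; induction E as [|y E IH]; intros G HN Hx; [destruct Hx|].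
  inversion HN; subst. rewrite !ExE_cons by auto.
  destruct (list_eq_dec Nat.eq_dec y x) as [<-|Hyx].
  - assert (E1 : forall b, (fun m => G (upd (fun z => veq z y || m z) y b)) = (fun m => G (upd m y b))).
    { intros b. apply functional_extensionality. intros m. f_equal. apply functional_extensionality.
      intros z. unfold upd. destruct (veq z y); auto. }
    rewrite !E1.
    assert (E2 : ExE E (fun m => G (upd m y true)) = ExE E (fun m => G (fun z => veq z y || m z))).
    { reflexivity. }
    assert (E3 : ExE E (fun m => G (upd m y false)) = ExE E G).
    { apply ExE_ext. intros m Hm. f_equal. apply functional_extensionality. intros z. unfold upd.
      destruct (veq z y) eqn:Ez; auto. apply veq_true in Ez; subst.
      destruct (m y) eqn:Em; auto. }
    rewrite E2, E3. lra.
  - destruct Hx as [Hx|Hx]; [congruence|].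
    rewrite (IH (fun m => G (fun z => veq z y || m z))) by auto.
    rewrite (IH G) by auto.
    assert (E1 : forall b, (fun m => G (upd (fun z => veq z y || m z) x b)) =
                           (fun m => G (fun z => veq z y || upd m x b z))).
    { intros b. apply functional_extensionality. intros m. f_equal. apply functional_extensionality.
      intros z. unfold upd. destruct (veq z x) eqn:Ez; auto.
      apply veq_true in Ez; subst. rewrite veq_false; auto. }
    rewrite !E1. lra.
Qed.

Lemma ExE_one x E F : NoDup E -> In x E ->
  ExE E (fun m => F (m x)) = p * F true + (1 - p) * F false.
Proof.
  intros HN Hx. rewrite (ExE_split x) by auto.
  rewrite (ExE_const E _ (F true)), (ExE_const E _ (F false)); auto;
  intros m; unfold upd; rewrite veq_refl; auto.
Qed.

Lemma ExE_two x y E F : NoDup E -> In x E -> In y E -> x <> y ->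
  ExE E (fun m => F (m x) (m y)) =
  p * p * F true true + p * (1 - p) * F true false
  + (1 - p) * p * F false true + (1 - p) * (1 - p) * F false false.
Proof.
  intros HN Hx Hy Hxy.
  assert (Hyx : y <> x) by auto.
  assert (A : forall b, ExE E (fun m => F (upd m x b x) (upd m x b y)) = p * F b true + (1-p) * F b false).
  { intros b. rewrite (ExE_split y) by auto.
    rewrite (ExE_const E _ (F b true)), (ExE_const E _ (F b false)); auto; intros m; unfold upd;
    rewrite veq_refl, (veq_false y x), veq_refl; auto. }
  rewrite (ExE_split x) by auto. cbv beta. rewrite !A. lra.
Qed.

End Ex.

Lemma cfgE_nonneg p E c : 0 <= p <= 1 -> 0 <= cfgE p E c.
Proof. intros Hp. induction E; simpl; [lra|]. apply Rmult_le_pos; auto.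
  destruct (memb a c); lra. Qed.

Lemma cfg_prob_nonneg p T c : 0 <= p <= 1 -> 0 <= cfg_prob p T c.
Proof. apply cfgE_nonneg. Qed.

Lemma sumR_map_minus {A} (f g : A -> R) l :
  sumR (map (fun x => f x - g x) l) = sumR (map f l) - sumR (map g l).
Proof. induction l; simpl; [lra|]. rewrite IHl; lra. Qed.

Lemma sumR_map_zero {A} (f : A -> R) l : (forall x, In x l -> f x = 0) -> sumR (map f l) = 0.
Proof. induction l; simpl; intros H; auto. rewrite H, IHl; auto. lra. Qed.

Section Tele.
Variables (p : R) (T : btree) (s : strategy) (e : vertex) (V : history -> R)
  (Inv : history -> Prop) (M : R).
Hypothesis Hp : 0 <= p <= 1.
Hypothesis Hinv0 : Inv [].
Hypothesis Hpres : forall h c q a, Inv h -> In (q, a) (s h c) -> Inv ((c, a) :: h).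
Hypothesis Hq : forall h c q a, Inv h -> In (q, a) (s h c) -> 0 <= q.
Hypothesis HV : forall h, Inv h -> 0 <= V h <= M.
Hypothesis Hstep : forall h, Inv h -> hits e h = false ->
  V h = 1 + sumR (map (fun c => cfg_prob p T c *
      sumR (map (fun qa => fst qa * (if hits e ((c, snd qa) :: h) then 0
                                      else V ((c, snd qa) :: h))) (s h c))) (configs T)).

Lemma hist_inv n wh : In wh (hist_dist p T s n) -> Inv (snd wh) /\ 0 <= fst wh.
Proof.
  revert wh; induction n as [|n IH]; intros wh H.
  - simpl in H. destruct H as [<-|[]]. simpl. split; auto; lra.
  - simpl in H. apply in_flat_map in H. destruct H as [[w h] [H1 H2]].
    apply IH in H1. simpl in H1. destruct H1 as [I1 W1].
    apply in_flat_map in H2. destruct H2 as [c [Hc H2]].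
    apply in_map_iff in H2. destruct H2 as [[q a] [<- H3]]. simpl. split.
    + eapply Hpres; eauto.
    + apply Rmult_le_pos; [apply Rmult_le_pos; auto|]. apply cfg_prob_nonneg; auto.
      eapply Hq; eauto.
Qed.

Definition Phi n := sumR (map (fun wh : R * history =>
  if hits e (snd wh) then 0 else fst wh * V (snd wh)) (hist_dist p T s n)).

Lemma Phi_step n : Phi (S n) = Phi n - surv p T s e n.
Proof.
  unfold Phi, surv. rewrite <- sumR_map_minus. simpl hist_dist.
  rewrite sumR_flat_map. apply sumR_map_ext. intros [w h] Hwh.
  apply hist_inv in Hwh. simpl in Hwh. destruct Hwh as [I W]. simpl snd; simpl fst.
  rewrite sumR_flat_map.
  destruct (hits e h) eqn:Eh.
  - rewrite sumR_map_zero; [lra|]. intros c _. rewrite map_map.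
    apply sumR_map_zero. intros [q a] _. simpl. rewrite Eh, Bool.orb_true_r. auto.
  - rewrite (Hstep h) by auto. rewrite Rmult_plus_distr_l, Rmult_1_r.
    rewrite <- sumR_map_scal. assert (forall a b c : R, c = b -> c = a + b - a) as X by (intros; lra).
    apply X. apply sumR_map_ext. intros c Hc. rewrite map_map.
    rewrite <- !sumR_map_scal. apply sumR_map_ext. intros [q a] _. simpl.
    destruct (traverses (Defs.pos h) a e || hits e h); ring.
Qed.

Lemma Phi_bound n : 0 <= Phi n <= M * surv p T s e n.
Proof.
  unfold Phi, surv. split.
  - apply sumR_nonneg. intros x Hx. apply in_map_iff in Hx. destruct Hx as [wh [<- Hwh]].
    apply hist_inv in Hwh. destruct (hits e (snd wh)); [lra|].
    apply Rmult_le_pos; [tauto|]. apply HV; tauto.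
  - rewrite <- sumR_map_scal. apply sumR_map_le. intros wh Hwh.
    apply hist_inv in Hwh. destruct (hits e (snd wh)); [lra|].
    destruct Hwh as [I W]. specialize (HV _ I). nra.
Qed.

Lemma surv_nonneg n : 0 <= surv p T s e n.
Proof. unfold surv. apply sumR_nonneg. intros x Hx. apply in_map_iff in Hx.
  destruct Hx as [wh [<- Hwh]]. apply hist_inv in Hwh. destruct (hits e (snd wh)); lra. Qed.

Lemma partial_sum n : sum_f_R0 (surv p T s e) n = V [] - Phi (S n).
Proof.
  induction n as [|n IH].
  - simpl. rewrite Phi_step. unfold Phi. simpl. lra.
  - simpl. rewrite IH. rewrite (Phi_step (S n)). lra.
Qed.

Theorem telescope : expected_time_is p T s e (V []).
Proof.
  unfold expected_time_is, infinite_sum. set (Sn := sum_f_R0 (surv p T s e)).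
  assert (Hg : Un_growing Sn).
  { intros n. unfold Sn. simpl. pose proof (surv_nonneg (S n)). lra. }
  assert (HM : 0 <= M) by (pose proof (HV [] Hinv0); lra).
  assert (Hb : forall n, Sn n <= V []).
  { intros n. unfold Sn. rewrite partial_sum. pose proof (Phi_bound (S n)). lra. }
  destruct (growing_cv Sn Hg) as [l Hl].
  { exists (V []). intros x [i ->]. apply Hb. }
  assert (Hle : forall n, Sn n <= l) by (apply growing_ineq; auto).
  assert (L1 : l <= V []).
  { destruct (Rle_dec l (V [])) as [?|Hn]; auto. exfalso.
    destruct (Hl (l - V []) ltac:(lra)) as [N HN]. specialize (HN N (le_n N)).
    specialize (Hb N). unfold Rdist in HN. rewrite Rabs_left1 in HN; lra. }
  assert (L2 : V [] <= l).
  { apply Rnot_lt_le. intros Hlt.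
    set (eps := (V [] - l) / (M + 1)).
    assert (He : eps > 0) by (unfold eps; apply Rdiv_lt_0_compat; lra).
    destruct (Hl eps He) as [N HN]. specialize (HN N (le_n N)).
    unfold Rdist in HN. rewrite Rabs_left1 in HN by (specialize (Hle N); lra).
    assert (E1 : V [] - Sn N <= M * (Sn (S N) - Sn N)).
    { unfold Sn. rewrite !partial_sum, (Phi_step (S N)). pose proof (Phi_bound (S N)). lra. }
    specialize (Hle (S N)).
    assert (E2 : V [] - Sn N <= M * (l - Sn N)).
    { apply Rle_trans with (1 := E1). apply Rmult_le_compat_l; lra. }
    assert (E3 : M * (l - Sn N) <= M * eps) by (apply Rmult_le_compat_l; lra).
    assert (E4 : M * eps + eps = V [] - l) by (unfold eps; field; lra).
    pose proof (Hg N). lra. }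
  replace (V []) with l by lra. exact Hl.
Qed.

End Tele.

Definition sfx (a b : list nat) : Prop := exists x, b = x ++ a.

Fixpoint suffixes (w : list nat) : list (list nat) :=
  match w with [] => [[]] | _ :: w' => w :: suffixes w' end.
Definition is_sfx (a b : list nat) : bool := existsb (veq a) (suffixes b).

Lemma sfx_cons a k b : sfx a (k :: b) <-> a = k :: b \/ sfx a b.
Proof. split.
  - intros [[|y x] H]; simpl in H; [left; auto|right]. inversion H; subst. exists x; auto.
  - intros [->|[x ->]]. exists []; auto. exists (k :: x); auto. Qed.

Lemma sfx_nil a : sfx a [] <-> a = [].
Proof. split. intros [x H]. destruct x, a; simpl in H; auto; discriminate.
  intros ->. exists []; auto. Qed.

Lemma is_sfx_spec a b : is_sfx a b = true <-> sfx a b.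
Proof. unfold is_sfx. induction b as [|k b IH]; simpl.
  - rewrite sfx_nil. rewrite Bool.orb_false_r. apply veq_true.
  - rewrite Bool.orb_true_iff, sfx_cons, IH, veq_true. tauto. Qed.

Lemma is_sfx_false a b : is_sfx a b = false <-> ~ sfx a b.
Proof. rewrite <- is_sfx_spec. destruct (is_sfx a b); split; congruence. Qed.

Lemma sfx_refl a : sfx a a.
Proof. exists []; auto. Qed.
Lemma sfx_trans a b c : sfx a b -> sfx b c -> sfx a c.
Proof. intros [x ->] [y ->]. exists (y ++ x). rewrite app_assoc; auto. Qed.
Lemma sfx_len a b : sfx a b -> (length a <= length b)%nat.
Proof. intros [x ->]. rewrite length_app; lia. Qed.
Lemma sfx_tl k b : sfx b (k :: b).
Proof. exists [k]; auto. Qed.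
Lemma sfx_nil_any b : sfx [] b.
Proof. exists b; rewrite app_nil_r; auto. Qed.
Lemma sfx_antisym a b : sfx a b -> (length b <= length a)%nat -> a = b.
Proof. intros [x ->] H. rewrite length_app in H. destruct x; simpl in *; auto. lia. Qed.
Lemma not_sfx_cons k b : ~ sfx (k :: b) b.
Proof. intros H. apply sfx_len in H. simpl in H. lia. Qed.

Lemma sfx_skipn a e : sfx a (tl e) -> e <> [] ->
  exists j rest, skipn (length a) (rev e) = j :: rest /\ sfx (j :: a) e /\
    skipn (length (j :: a)) (rev e) = rest /\ (rest = [] <-> j :: a = e).
Proof.
  intros [x Hx] He. destruct e as [|i e']; [congruence|]. simpl in Hx. subst e'.
  assert (Hs : forall n, skipn (length a + n) (rev (i :: x ++ a)) = skipn n (rev (i :: x))).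
  { intros n. replace (i :: x ++ a) with ((i :: x) ++ a) by auto. rewrite rev_app_distr.
    rewrite skipn_app, length_rev. replace (length a + n - length a)%nat with n by lia.
    rewrite skipn_all2 by (rewrite length_rev; lia). auto. }
  destruct (rev (i :: x)) as [|j rest] eqn:Er.
  { simpl in Er. apply (f_equal (@length nat)) in Er. rewrite length_app in Er. simpl in Er. lia. }
  exists j, rest. split; [|split; [|split]].
  - rewrite <- (Nat.add_0_r (length a)), Hs. auto.
  - assert (i :: x = rev rest ++ [j]) by (rewrite <- (rev_involutive (i :: x)), Er; auto).
    exists (rev rest). rewrite app_comm_cons, H, <- app_assoc. auto.
  - simpl length. rewrite <- Nat.add_1_r, Hs. auto.
  - split.
    + intros ->. assert (i :: x = [j]) by (rewrite <- (rev_involutive (i :: x)), Er; auto).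
      inversion H; subst. auto.
    + intros H. inversion H. assert (length (i :: x) = 1%nat).
      { apply (f_equal (@length nat)) in H2. rewrite length_app in H2. simpl. simpl in H2. lia. }
      apply (f_equal (@length nat)) in Er. rewrite length_rev in Er. simpl in Er.
      destruct rest; auto. simpl in Er, H0. lia.
Qed.

Lemma traverses_down v k f : traverses v (Some (k :: v)) f = veq f (k :: v).
Proof.
  unfold traverses. destruct (veq f (k :: v)) eqn:E.
  - apply veq_true in E; subst. cbn [tl]. rewrite !veq_refl. reflexivity.
  - apply Bool.orb_false_iff. split.
    + apply Bool.andb_false_iff. right. apply veq_false. intros Hq; subst; rewrite veq_refl in E; discriminate.
    + apply Bool.andb_false_iff. destruct (veq v f) eqn:E2; [|auto]. right.
      apply veq_true in E2; subst. apply veq_false. intros H.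
      apply (f_equal (@length nat)) in H. destruct f; simpl in H; lia.
Qed.

Lemma traverses_up i u f : traverses (i :: u) (Some u) f = veq f (i :: u).
Proof.
  unfold traverses. destruct (veq f (i :: u)) eqn:E.
  - apply veq_true in E; subst. cbn [tl]. rewrite !veq_refl. rewrite Bool.orb_true_r. reflexivity.
  - apply Bool.orb_false_iff. split.
    + apply Bool.andb_false_iff. destruct (veq (i :: u) (tl f)) eqn:E2; [|auto]. right.
      apply veq_true in E2. apply veq_false. intros <-.
      destruct u; simpl in E2; [discriminate|].
      apply (f_equal (@length nat)) in E2. simpl in E2; lia.
    + apply Bool.andb_false_iff. left. apply veq_false. intros Hq; subst; rewrite veq_refl in E; discriminate.
Qed.

Section Strat.
Variables (p : R) (T : btree).

Lemma memb_child v t k : subtree T v = Some t ->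
  memb (k :: v) (edges T) = match child t k with Some _ => true | None => false end.
Proof. intros H. destruct (memb (k :: v) (edges T)) eqn:E.
  - apply memb_In, In_edges_cons in E. destruct E as [s [H1 H2]]. rewrite H in H1; inversion H1; subst.
    destruct (child s k); congruence.
  - apply memb_notIn in E. destruct (child t k) eqn:E2; auto. exfalso; apply E.
    apply In_edges_cons. exists t. split; auto. congruence. Qed.

Definition UPact (v : vertex) (c : config) : list (R * action) :=
  match v with [] => [(1, None)] | _ :: u => if memb v c then [(1, Some u)] else [(1, None)] end.
Definition one (w : vertex) (c : config) : list (R * action) :=
  if memb w c then [(1, Some w)] else [(1, None)].
Definition two (l r : btree) (v : vertex) (c : config) : list (R * action) :=
  if memb (0%nat :: v) c then
    (if memb (1%nat :: v) c then [(alpha p l r, Some (0%nat :: v)); (1 - alpha p l r, Some (1%nat :: v))]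
     else [(1, Some (0%nat :: v))])
  else (if memb (1%nat :: v) c then [(1, Some (1%nat :: v))] else [(1, None)]).

Definition sig_out (t : btree) (v : vertex) (D : vertex -> bool) (c : config) : list (R * action) :=
  match t with
  | Unary s => if D (0%nat :: v) then UPact v c else one (0%nat :: v) c
  | Binary l r => if D (0%nat :: v) then (if D (1%nat :: v) then UPact v c else one (1%nat :: v) c)
      else (if D (1%nat :: v) then one (0%nat :: v) c else two l r v c)
  | Leaf => UPact v c
  end.

Lemma sigma_eq h c t : subtree T (Defs.pos h) = Some t ->
  sigma_alpha p T h c = sig_out t (Defs.pos h) (fun f => hits f h) c.
Proof.
  intros Ht. unfold sigma_alpha, traversed. set (v := Defs.pos h) in *.
  cbn [filter]. rewrite !(memb_child v t) by auto. rewrite Ht.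
  destruct t as [|s|l r]; simpl.
  - unfold UPact. destruct v; auto.
  - destruct (hits (0%nat :: v) h); simpl.
    + unfold UPact; destruct v; auto.
    + unfold one. destruct (memb (0%nat :: v) c); auto.
  - unfold one, two, UPact.
    destruct (hits (0%nat :: v) h), (hits (1%nat :: v) h); simpl;
    destruct (memb (0%nat :: v) c), (memb (1%nat :: v) c); simpl; auto; destruct v; auto.
Qed.

End Strat.

Lemma subtree_sfx T f g s : subtree T g = Some s -> sfx f g -> exists s', subtree T f = Some s'.
Proof. intros H [x ->]. unfold subtree in *. rewrite rev_app_distr, subtree_fwd_app in H.
  destruct (subtree_fwd T (rev f)); eauto. Qed.

Lemma vertex_edge T j w s : subtree T (j :: w) = Some s -> In (j :: w) (edges T).
Proof. intros H. rewrite subtree_cons in H. apply In_edges_cons.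
  destruct (subtree T w) as [s0|]; [|discriminate]. exists s0; split; auto. congruence. Qed.

Lemma edge_sfx T f g : In g (edges T) -> sfx f g -> f <> [] -> In f (edges T).
Proof. intros Hg Hs Hf. destruct (subtree_edge T g Hg) as [s Hs'].
  destruct (subtree_sfx T f g s Hs' Hs) as [s' H]. destruct f; [congruence|].
  eapply vertex_edge; eauto. Qed.

Section V.
Variables (p : R) (T : btree) (e : vertex).

Definition P2 := 1 - (1 - p) ^ 2.
Definition pil (l r : btree) := (p * (1 - p) + p ^ 2 * alpha p l r) / P2.
Definition pir (l r : btree) := (p * (1 - p) + p ^ 2 * (1 - alpha p l r)) / P2.

Fixpoint Hf (t : btree) (ps : list nat) : R :=
  match t with
  | Leaf => 0
  | Unary s => match ps with 0%nat :: rest => 1 / p + Hf s rest | _ => 0 end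
  | Binary l r => match ps with
      | 0%nat :: rest => 1 / P2 + pir l r * tau_edge p r + Hf l rest
      | 1%nat :: rest => 1 / P2 + pil l r * tau_edge p l + Hf r rest
      | _ => 0 end
  end.

Definition RC (D : vertex -> bool) (x : vertex) : R :=
  match subtree T x with
  | Some (Unary s) => if D (0%nat :: x) then 0 else tau_edge p s
  | Some (Binary l r) =>
      if D (0%nat :: x) then (if D (1%nat :: x) then 0 else tau_edge p r)
      else (if D (1%nat :: x) then tau_edge p l else tau p (Binary l r))
  | _ => 0
  end.

Definition Ahere (D : vertex -> bool) (a : vertex) : R :=
  match subtree T a with
  | Some (Unary s) => match skipn (length a) (rev e) with 0%nat :: rest => 1 / p + Hf s rest | _ => 0 end
  | Some (Binary l r) => match skipn (length a) (rev e) with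
      | 0%nat :: rest => (if D (1%nat :: a) then 1 / p else 1 / P2 + pir l r * tau_edge p r) + Hf l rest
      | 1%nat :: rest => (if D (0%nat :: a) then 1 / p else 1 / P2 + pil l r * tau_edge p l) + Hf r rest
      | _ => 0 end
  | _ => 0
  end.

Fixpoint Vup (D : vertex -> bool) (v : vertex) : R :=
  if is_sfx v (tl e) then Ahere D v
  else match v with [] => 0 | _ :: u => RC D v + 1 / p + Vup D u end.

Definition Dh (h : history) : vertex -> bool := fun f => hits f h.
Definition V (h : history) : R := Vup (Dh h) (Defs.pos h).

Definition InvD (v : vertex) (D : vertex -> bool) : Prop :=
  (exists t, subtree T v = Some t) /\
  (forall f, In f (edges T) -> sfx f v -> D f = true) /\
  (forall f g, D f = true -> ~ sfx f v -> In g (edges T) -> sfx f g -> D g = true) /\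
  (forall f g, D g = true -> In f (edges T) -> sfx f g -> D f = true).

Definition Inv (h : history) : Prop := InvD (Defs.pos h) (Dh h).

Lemma Inv_nil : Inv [].
Proof. unfold Inv, InvD, Dh. simpl. split; [exists T; apply subtree_nil|].
  split; [|split]; try (intros; discriminate).
  intros f Hf Hs. apply sfx_nil in Hs. subst. exfalso; eapply nil_notin_edges; eauto. Qed.

Lemma hits_down h c k f : hits f ((c, Some (k :: Defs.pos h)) :: h) = veq f (k :: Defs.pos h) || hits f h.
Proof. cbn [hits]. rewrite traverses_down. auto. Qed.

Lemma hits_up h c i u f : Defs.pos h = i :: u -> hits f ((c, Some u) :: h) = veq f (i :: u) || hits f h.
Proof. intros H. cbn [hits]. rewrite H, traverses_up. auto. Qed.

Lemma Dh_down h c k : Dh ((c, Some (k :: Defs.pos h)) :: h) = fun f => veq f (k :: Defs.pos h) || Dh h f.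
Proof. apply functional_extensionality. intros f. apply hits_down. Qed.

Lemma Dh_none h c : Dh ((c, None) :: h) = Dh h.
Proof. reflexivity. Qed.

Lemma Inv_none h c : Inv h -> Inv ((c, None) :: h).
Proof. unfold Inv. rewrite Dh_none. auto. Qed.

Lemma InvD_down v D k : InvD v D -> In (k :: v) (edges T) -> D (k :: v) = false ->
  InvD (k :: v) (fun f => veq f (k :: v) || D f).
Proof.
  intros [I1 [I2 [I3 I4]]] Hw Hd.
  split; [|split; [|split]].
  - apply subtree_edge; auto.
  - intros f Hf Hs. apply sfx_cons in Hs. destruct Hs as [->|Hs].
    + rewrite veq_refl; auto.
    + rewrite I2; auto. apply Bool.orb_true_r.
  - intros f g H1 H2 Hg H3. apply Bool.orb_true_iff in H1. destruct H1 as [H1|H1].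
    + apply veq_true in H1; subst. exfalso; apply H2, sfx_refl.
    + rewrite (I3 f g); auto. apply Bool.orb_true_r. intros Hs; apply H2.
      eapply sfx_trans; eauto. apply sfx_tl.
  - intros f g H1 Hf H3. apply Bool.orb_true_iff in H1. destruct H1 as [H1|H1].
    + apply veq_true in H1; subst. apply sfx_cons in H3. destruct H3 as [->|H3].
      * rewrite veq_refl; auto.
      * rewrite I2; auto. apply Bool.orb_true_r.
    + rewrite (I4 f g); auto. apply Bool.orb_true_r.
Qed.

Lemma Inv_down h c k : Inv h -> In (k :: Defs.pos h) (edges T) -> hits (k :: Defs.pos h) h = false ->
  Inv ((c, Some (k :: Defs.pos h)) :: h).
Proof. intros H1 H2 H3. unfold Inv. rewrite Dh_down. apply InvD_down; auto. Qed.

Lemma Inv_up h c i u : Inv h -> Defs.pos h = i :: u ->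
  (forall k, In (k :: Defs.pos h) (edges T) -> hits (k :: Defs.pos h) h = true) ->
  Inv ((c, Some u) :: h).
Proof.
  intros HI Hv Hch. unfold Inv in *. destruct HI as [I1 [I2 [I3 I4]]].
  assert (Hve : In (i :: u) (edges T)).
  { destruct I1 as [t Ht]. rewrite Hv in Ht. eapply vertex_edge; eauto. }
  assert (HDv : Dh h (i :: u) = true) by (rewrite <- Hv; apply I2; [rewrite Hv; auto|apply sfx_refl]).
  assert (HD : Dh ((c, Some u) :: h) = Dh h).
  { apply functional_extensionality. intros f. unfold Dh at 1. rewrite (hits_up h c i u f Hv).
    destruct (veq f (i :: u)) eqn:E; auto. apply veq_true in E; subst; auto. }
  rewrite HD. simpl Defs.pos. rewrite Hv in *.
  split; [|split; [|split]].
  - destruct I1 as [t Ht]. eapply subtree_sfx; eauto. apply sfx_tl.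
  - intros f Hf Hs. apply I2; auto. eapply sfx_trans; eauto. apply sfx_tl.
  - intros f g H1 H2 Hg H3.
    destruct (list_eq_dec Nat.eq_dec f (i :: u)) as [->|Hne].
    + destruct H3 as [x ->]. destruct x as [|k x] using rev_ind; [simpl; auto|].
      rewrite <- app_assoc in *. simpl in *.
      apply (I3 (k :: i :: u)); auto.
      * apply Hch. apply (edge_sfx T _ (x ++ k :: i :: u)); auto. exists x; auto. discriminate.
      * apply not_sfx_cons.
      * exists x; auto.
    + apply (I3 f g); auto. intros Hs. apply sfx_cons in Hs. destruct Hs; auto.
  - intros f g H1 Hf H3. apply (I4 f g); auto.
Qed.

End V.

Lemma In_child T v t k : subtree T v = Some t -> In (k :: v) (edges T) <-> child t k <> None.
Proof. intros H. rewrite In_edges_cons. split.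
  - intros [s [H1 H2]]. rewrite H in H1. inversion H1; subst; auto.
  - intros H2. exists t; auto. Qed.

Lemma alpha_range p l r : 0 <= alpha p l r <= 1.
Proof. unfold alpha, proj01. unfold Rmax, Rmin.
  destruct (Rle_dec 1 _); destruct (Rle_dec 0 _); lra. Qed.

Section Act.
Variables (p : R) (T : btree).

Lemma sigma_actions h c q a : Inv T h -> In (q, a) (sigma_alpha p T h c) ->
  0 <= q /\
  (a = None \/
   (exists k, a = Some (k :: Defs.pos h) /\ In (k :: Defs.pos h) (edges T) /\ hits (k :: Defs.pos h) h = false) \/
   (exists i u, Defs.pos h = i :: u /\ a = Some u /\
      forall k, In (k :: Defs.pos h) (edges T) -> hits (k :: Defs.pos h) h = true)).
Proof.
  intros HI Hin. destruct HI as [[t Ht] _].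
  rewrite (sigma_eq p T h c t Ht) in Hin. set (v := Defs.pos h) in *.
  assert (Ch : forall k, In (k :: v) (edges T) <-> child t k <> None) by (intros; apply In_child; auto).
  assert (UP : (forall k, In (k :: v) (edges T) -> hits (k :: v) h = true) ->
     In (q, a) (UPact v c) -> 0 <= q /\ (a = None \/ (exists k, a = Some (k :: v) /\ In (k :: v) (edges T) /\ hits (k :: v) h = false) \/
     (exists i u, v = i :: u /\ a = Some u /\ forall k, In (k :: v) (edges T) -> hits (k :: v) h = true))).
  { intros Hall H. unfold UPact in H. destruct v as [|i u] eqn:Ev.
    - destruct H as [H|[]]. inversion H; subst. split; [lra|auto].
    - destruct (memb (i :: u) c); destruct H as [H|[]]; inversion H; subst; split; try lra; auto.
      right; right. exists i, u. auto. }
  assert (ONE : forall k, In (k :: v) (edges T) -> hits (k :: v) h = false ->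
     In (q, a) (one (k :: v) c) -> 0 <= q /\ (a = None \/ (exists k, a = Some (k :: v) /\ In (k :: v) (edges T) /\ hits (k :: v) h = false) \/
     (exists i u, v = i :: u /\ a = Some u /\ forall k, In (k :: v) (edges T) -> hits (k :: v) h = true))).
  { intros k H1 H2 H. unfold one in H. destruct (memb (k :: v) c); destruct H as [H|[]]; inversion H; subst;
    split; try lra; auto. right; left. exists k; auto. }
  destruct t as [|s|l r]; simpl in Hin.
  - apply UP; auto. intros k Hk. apply Ch in Hk. destruct k; simpl in Hk; congruence.
  - destruct (hits (0%nat :: v) h) eqn:E0.
    + apply UP; auto. intros k Hk. apply Ch in Hk. destruct k; simpl in Hk; [auto|congruence].
    + apply (ONE 0%nat); auto. apply Ch. simpl; congruence.
  - assert (I0 : In (0%nat :: v) (edges T)) by (apply Ch; simpl; congruence).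
    assert (I1 : In (1%nat :: v) (edges T)) by (apply Ch; simpl; congruence).
    destruct (hits (0%nat :: v) h) eqn:E0; destruct (hits (1%nat :: v) h) eqn:E1.
    + apply UP; auto. intros k Hk. apply Ch in Hk. destruct k as [|[|k]]; simpl in Hk; auto; congruence.
    + apply (ONE 1%nat); auto.
    + apply (ONE 0%nat); auto.
    + unfold two in Hin. pose proof (alpha_range p l r).
      destruct (memb (0%nat :: v) c), (memb (1%nat :: v) c);
        repeat (destruct Hin as [Hin|Hin]; [inversion Hin; subst|]); try contradiction;
        (split; [lra|]); auto; right; left; eauto.
Qed.

Lemma sigma_pres h c q a : Inv T h -> In (q, a) (sigma_alpha p T h c) -> Inv T ((c, a) :: h).
Proof.
  intros HI Hin. destruct (sigma_actions h c q a HI Hin) as [_ [->|[[k [-> [H1 H2]]]|[i [u [H1 [-> H2]]]]]]].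
  - apply Inv_none; auto.
  - apply Inv_down; auto.
  - eapply Inv_up; eauto.
Qed.

End Act.

Section Help.
Variables (p : R) (T : btree) (e : vertex).

Lemma RC_ext D1 D2 x : D1 (0%nat :: x) = D2 (0%nat :: x) -> D1 (1%nat :: x) = D2 (1%nat :: x) ->
  RC p T D1 x = RC p T D2 x.
Proof. intros H0 H1. unfold RC. rewrite H0, H1. auto. Qed.

Lemma Ahere_ext D1 D2 x : D1 (0%nat :: x) = D2 (0%nat :: x) -> D1 (1%nat :: x) = D2 (1%nat :: x) ->
  Ahere p T e D1 x = Ahere p T e D2 x.
Proof. intros H0 H1. unfold Ahere. rewrite H0, H1. auto. Qed.

Lemma Vup_ext D1 D2 v : (forall k x, sfx x v -> D1 (k :: x) = D2 (k :: x)) ->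
  Vup p T e D1 v = Vup p T e D2 v.
Proof.
  induction v as [|i u IH]; intros H; simpl.
  - destruct (is_sfx [] (tl e)); auto. apply Ahere_ext; apply H; apply sfx_refl.
  - destruct (is_sfx (i :: u) (tl e)).
    + apply Ahere_ext; apply H; apply sfx_refl.
    + rewrite (RC_ext D1 D2) by (apply H; apply sfx_refl). rewrite IH; auto.
      intros k x Hx. apply H. eapply sfx_trans; eauto. apply sfx_tl.
Qed.

Lemma Vup_A D v : is_sfx v (tl e) = true -> Vup p T e D v = Ahere p T e D v.
Proof. intros H. destruct v; simpl; rewrite H; auto. Qed.

Lemma Vup_B D i u : is_sfx (i :: u) (tl e) = false ->
  Vup p T e D (i :: u) = RC p T D (i :: u) + 1 / p + Vup p T e D u.
Proof. intros H. simpl. rewrite H. auto. Qed.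

Lemma is_sfx_nil b : is_sfx [] b = true.
Proof. apply is_sfx_spec. apply sfx_nil_any. Qed.

Definition tauv (x : vertex) : R := match subtree T x with Some t => tau p t | None => 0 end.

Lemma RC_fresh D x : D (0%nat :: x) = false -> D (1%nat :: x) = false -> RC p T D x = tauv x.
Proof. intros H0 H1. unfold RC, tauv. rewrite H0, H1.
  destruct (subtree T x) as [[|s|l r]|]; simpl; auto. Qed.

Lemma Hf_nil t : Hf p t [] = 0.
Proof. destruct t; reflexivity. Qed.

Lemma Ahere_fresh D a ta : subtree T a = Some ta -> D (0%nat :: a) = false -> D (1%nat :: a) = false ->
  Ahere p T e D a = Hf p ta (skipn (length a) (rev e)).
Proof. intros Ht H0 H1. unfold Ahere. rewrite Ht, H0, H1.
  destruct ta as [|s|l r]; simpl; auto; destruct (skipn (length a) (rev e)) as [|[|[|j]] rest]; auto. Qed.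

Lemma to_ExE (G : config -> R) (H : (vertex -> bool) -> R) :
  (forall c, G c = H (fun z => memb z c)) ->
  sumR (map (fun c => cfg_prob p T c * G c) (configs T)) = ExE p (edges T) H.
Proof. intros HG. unfold ExE, configs. apply sumR_map_ext. intros c _. rewrite HG. reflexivity. Qed.

Lemma E_one w (F : action -> R) : In w (edges T) ->
  sumR (map (fun c => cfg_prob p T c * sumR (map (fun qa => fst qa * F (snd qa)) (one w c))) (configs T))
  = p * F (Some w) + (1 - p) * F None.
Proof. intros Hw.
  rewrite (to_ExE _ (fun m => if m w then 1 * F (Some w) + 0 else 1 * F None + 0)).
  - rewrite (ExE_one p w (edges T) (fun b => if b then 1 * F (Some w) + 0 else 1 * F None + 0)); auto.
    lra. apply NoDup_edges.
  - intros c. unfold one. destruct (memb w c); reflexivity.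
Qed.

Lemma E_up i u (F : action -> R) : In (i :: u) (edges T) ->
  sumR (map (fun c => cfg_prob p T c * sumR (map (fun qa => fst qa * F (snd qa)) (UPact (i :: u) c))) (configs T))
  = p * F (@Some vertex u) + (1 - p) * F None.
Proof. intros Hw.
  rewrite (to_ExE _ (fun m => if m (i :: u) then 1 * F (@Some vertex u) + 0 else 1 * F None + 0)).
  - rewrite (ExE_one p (i :: u) (edges T) (fun b => if b then 1 * F (@Some vertex u) + 0 else 1 * F None + 0)); auto.
    lra. apply NoDup_edges.
  - intros c. unfold UPact. destruct (memb (i :: u) c); reflexivity.
Qed.

Lemma E_two l r v (F : action -> R) : In (0%nat :: v) (edges T) -> In (1%nat :: v) (edges T) ->
  sumR (map (fun c => cfg_prob p T c * sumR (map (fun qa => fst qa * F (snd qa)) (two p l r v c))) (configs T))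
  = p * p * (alpha p l r * F (@Some vertex (0%nat :: v)) + (1 - alpha p l r) * F (@Some vertex (1%nat :: v)))
    + p * (1 - p) * F (@Some vertex (0%nat :: v)) + (1 - p) * p * F (@Some vertex (1%nat :: v))
    + (1 - p) * (1 - p) * F None.
Proof. intros H0 H1.
  set (K := fun b0 b1 : bool => if b0 then (if b1 then alpha p l r * F (@Some vertex (0%nat :: v)) + ((1 - alpha p l r) * F (@Some vertex (1%nat :: v)) + 0)
     else 1 * F (@Some vertex (0%nat :: v)) + 0) else (if b1 then 1 * F (@Some vertex (1%nat :: v)) + 0 else 1 * F None + 0)).
  rewrite (to_ExE _ (fun m => K (m (0%nat :: v)) (m (1%nat :: v)))).
  - rewrite (ExE_two p (0%nat :: v) (1%nat :: v) (edges T) K); auto.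
    unfold K. lra. apply NoDup_edges. discriminate.
  - intros c. unfold two, K. destruct (memb (0%nat :: v) c), (memb (1%nat :: v) c); reflexivity.
Qed.

End Help.

Lemma sfx_same_len a b c : sfx a c -> sfx b c -> length a = length b -> a = b.
Proof. intros [x ->] [y Hy] Hab. assert (H : length x = length y).
  { apply (f_equal (@length nat)) in Hy. rewrite !length_app in Hy. lia. }
  clear Hab. revert y Hy H; induction x as [|k x IH]; intros [|k' y] Hy Hl; simpl in *; try lia; auto.
  inversion Hy; subst. eapply IH; eauto. Qed.

Section Step.
Variables (p : R) (T : btree) (e : vertex).
Hypothesis Hp : 0 < p <= 1.
Hypothesis He : In e (edges T).

Lemma P2_pos : 0 < P2 p.
Proof. unfold P2. nra. Qed.

Lemma step h : Inv T h -> hits e h = false ->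
  V p T e h = 1 + sumR (map (fun c => cfg_prob p T c *
      sumR (map (fun qa => fst qa * (if hits e ((c, snd qa) :: h) then 0
                                      else V p T e ((c, snd qa) :: h))) (sigma_alpha p T h c))) (configs T)).
Proof.
  intros HI Hne. pose proof P2_pos as HP2.
  destruct HI as [[t Ht] [I2 [I3 I4]]].
  set (NX := fun a => if hits e (([] : config, a) :: h) then 0 else V p T e (([], a) :: h)).
  rewrite (sumR_map_ext _ (fun c => cfg_prob p T c *
      sumR (map (fun qa => fst qa * NX (snd qa)) (sig_out p t (Defs.pos h) (Dh h) c)))).
  2:{ intros c _. rewrite (sigma_eq p T h c t Ht). reflexivity. }
  assert (NX0 : NX None = V p T e h).
  { unfold NX. cbn [hits traverses]. rewrite Hne. reflexivity. }
  assert (NXd : forall k, NX (@Some vertex (k :: Defs.pos h)) = if veq e (k :: Defs.pos h) then 0 else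
     Vup p T e (fun f => veq f (k :: Defs.pos h) || Dh h f) (k :: Defs.pos h)).
  { intros k. unfold NX. rewrite hits_down, Hne, Bool.orb_false_r.
    destruct (veq e (k :: Defs.pos h)); auto. unfold V. rewrite Dh_down. reflexivity. }
  assert (NXu : forall i u, Defs.pos h = i :: u -> Dh h (i :: u) = true -> NX (@Some vertex u) = Vup p T e (Dh h) u).
  { intros i u Hv HD. unfold NX. cbv beta. rewrite (hits_up h _ i u e Hv), Hne, Bool.orb_false_r.
    assert (veq e (i :: u) = false).
    { apply veq_false. intros ->. unfold Dh in HD. congruence. }
    rewrite H. unfold V. f_equal.
    apply functional_extensionality. intros f. unfold Dh at 1. rewrite (hits_up h _ i u f Hv).
    destruct (veq f (i :: u)) eqn:E; auto. apply veq_true in E; subst; auto. }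
  unfold V. set (v := Defs.pos h) in *. set (D := Dh h) in *.
  assert (HDe : D e = false) by exact Hne.
  assert (Hen : e <> []) by (intros ->; eapply nil_notin_edges; eauto).
  assert (Fresh : forall w k, In w (edges T) -> D w = false -> D (k :: w) = false).
  { intros w k Hw Hdw. destruct (D (k :: w)) eqn:E; auto. rewrite <- Hdw. symmetry. apply (I4 w (k :: w)); auto. apply sfx_tl. }
  destruct (is_sfx v (tl e)) eqn:Es.
  -
    rewrite Vup_A by auto.
    assert (HVh : V p T e h = Ahere p T e D v) by (unfold V; apply Vup_A; auto).
    apply is_sfx_spec in Es.
    destruct (sfx_skipn v e Es Hen) as [j [rest [Hsk [Hwe [Hsk2 Hrest]]]]].
    assert (Hw : In (j :: v) (edges T)) by (apply (edge_sfx T _ e); auto; discriminate).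
    assert (HDw : D (j :: v) = false).
    { destruct (D (j :: v)) eqn:E; auto. rewrite <- HDe. symmetry. apply (I3 (j :: v) e); auto. apply not_sfx_cons. }
    destruct (subtree_edge T _ Hw) as [tw Htw].
    assert (Hch : child t j = Some tw) by (rewrite subtree_cons, Ht in Htw; auto).
    assert (NXw : NX (@Some vertex (j :: v)) = Hf p tw rest).
    { rewrite NXd. fold v D. destruct (veq e (j :: v)) eqn:Ew.
      - apply veq_true in Ew. symmetry in Ew. apply Hrest in Ew. rewrite Ew, Hf_nil; auto.
      - apply veq_false_iff in Ew. rewrite Vup_A.
        + rewrite (Ahere_fresh p T e _ _ tw Htw).
          * rewrite Hsk2. auto.
          * cbv beta. rewrite veq_false by (intros H; apply (f_equal (@length nat)) in H; simpl in H; lia).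
            simpl. apply Fresh; auto.
          * cbv beta. rewrite veq_false by (intros H; apply (f_equal (@length nat)) in H; simpl in H; lia).
            simpl. apply Fresh; auto.
        + apply is_sfx_spec. destruct Hwe as [x Hx]. destruct x as [|y x]; [simpl in Hx; congruence|].
          exists x. rewrite Hx. auto. }
    assert (NXo : forall k, k <> j -> In (k :: v) (edges T) -> D (k :: v) = false ->
       NX (@Some vertex (k :: v)) = tauv p T (k :: v) + 1 / p + Ahere p T e (fun f => veq f (k :: v) || D f) v).
    { intros k Hkj Hk HDk. rewrite NXd. fold v D.
      assert (Hno : ~ sfx (k :: v) (tl e)).
      { intros Hs. apply Hkj. assert (sfx (k :: v) e).
        { eapply sfx_trans; eauto. destruct e; [congruence|]. apply sfx_tl. }
        assert (k :: v = j :: v) by (eapply sfx_same_len; eauto). congruence. }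
      rewrite veq_false.
      2:{ intros Heq. apply Hkj. subst e.
          assert (j :: v = k :: v) by (eapply sfx_same_len; eauto; apply sfx_refl). congruence. }
      rewrite Vup_B by (apply is_sfx_false; auto).
      rewrite (RC_fresh p T).
      2,3: cbv beta; rewrite veq_false by (intros H; apply (f_equal (@length nat)) in H; simpl in H; lia);
           simpl; apply Fresh; auto.
      rewrite Vup_A by (apply is_sfx_spec; auto). auto. }
    destruct t as [|s|l r]; simpl in Hch; [discriminate| |].
    + destruct j; [|discriminate]. inversion Hch; subst tw. simpl sig_out. rewrite HDw.
      rewrite E_one by auto. rewrite NXw, NX0. rewrite HVh.
      unfold Ahere. rewrite Ht, Hsk. field. lra.
    + destruct j as [|[|j]]; [| |discriminate]; inversion Hch; subst tw; simpl sig_out; rewrite HDw.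
      * destruct (D (1%nat :: v)) eqn:E1.
        -- rewrite E_one by auto. rewrite NXw, NX0. rewrite HVh.
           unfold Ahere. rewrite Ht, Hsk, E1. field. lra.
        -- assert (Hw1 : In (1%nat :: v) (edges T)) by (apply (In_child T v _ 1 Ht); simpl; congruence).
           rewrite E_two by auto. rewrite NXw, NX0, (NXo 1%nat) by auto.
           rewrite HVh.
           unfold Ahere. rewrite Ht, Hsk, E1. cbv beta. rewrite veq_refl. simpl.
           unfold tauv. rewrite subtree_cons, Ht. simpl.
           unfold pir, P2, tau_edge in *. field. lra.
      * destruct (D (0%nat :: v)) eqn:E0.
        -- rewrite E_one by auto. rewrite NXw, NX0. rewrite HVh.
           unfold Ahere. rewrite Ht, Hsk, E0. field. lra.
        -- assert (Hw0 : In (0%nat :: v) (edges T)) by (apply (In_child T v _ 0 Ht); simpl; congruence).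
           rewrite E_two by auto. rewrite NXw, NX0, (NXo 0%nat) by auto.
           rewrite HVh.
           unfold Ahere. rewrite Ht, Hsk, E0. cbv beta. rewrite veq_refl. simpl.
           unfold tauv. rewrite subtree_cons, Ht. simpl.
           unfold pil, P2, tau_edge in *. field. lra.
  -
    assert (HVh : V p T e h = Vup p T e D v) by reflexivity.
    clearbody v D. destruct v as [|i u]; [rewrite is_sfx_nil in Es; discriminate|].
    rewrite (Vup_B p T e D i u Es) in *.
    assert (Hve : In (i :: u) (edges T)) by (eapply vertex_edge; eauto).
    assert (HDv : D (i :: u) = true) by (apply I2; auto; apply sfx_refl).
    assert (NXup := NXu i u eq_refl HDv).
    assert (NXdn : forall k, In (k :: i :: u) (edges T) -> D (k :: i :: u) = false ->
       NX (@Some vertex (k :: i :: u)) = tauv p T (k :: i :: u) + 1 / p +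
         (RC p T (fun f => veq f (k :: i :: u) || D f) (i :: u) + 1 / p + Vup p T e D u)).
    { intros k Hk HDk. rewrite NXd. rewrite veq_false.
      2:{ intros ->. simpl in Es. rewrite is_sfx_false in Es. apply Es, sfx_refl. }
      rewrite Vup_B.
      2:{ apply is_sfx_false. intros Hs. rewrite is_sfx_false in Es. apply Es.
          eapply sfx_trans; eauto. apply sfx_tl. }
      rewrite (RC_fresh p T).
      2,3: cbv beta; rewrite veq_false by (intros H; apply (f_equal (@length nat)) in H; simpl in H; lia);
           simpl; apply Fresh; auto.
      rewrite (Vup_B p T e _ i u Es). f_equal. f_equal. apply Vup_ext.
      intros k' x Hx. rewrite veq_false; auto. intros H. inversion H; subst.
      apply (not_sfx_cons i u); auto. }
    assert (V01 : veq (1%nat :: i :: u) (0%nat :: i :: u) = false) by (apply veq_false; congruence).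
    assert (V10 : veq (0%nat :: i :: u) (1%nat :: i :: u) = false) by (apply veq_false; congruence).
    destruct t as [|s|l r]; cbn [sig_out].
    + rewrite E_up by auto. rewrite NXup, NX0, HVh.
      unfold RC. rewrite Ht. field. lra.
    + destruct (D (0%nat :: i :: u)) eqn:E0.
      * rewrite E_up by auto. rewrite NXup, NX0, HVh.
        unfold RC. rewrite Ht, E0. field. lra.
      * assert (Hw0 : In (0%nat :: i :: u) (edges T)) by (apply (In_child T _ _ 0 Ht); simpl; congruence).
        rewrite E_one by auto. rewrite NXdn, NX0, HVh by auto.
        unfold RC, tauv. rewrite ?(subtree_cons T 0 (i :: u)), ?(subtree_cons T 1 (i :: u)), Ht. cbv beta. rewrite veq_refl, E0. simpl.
        unfold tau_edge. field. lra.
    + assert (Hw0 : In (0%nat :: i :: u) (edges T)) by (apply (In_child T _ _ 0 Ht); simpl; congruence).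
      assert (Hw1 : In (1%nat :: i :: u) (edges T)) by (apply (In_child T _ _ 1 Ht); simpl; congruence).
      destruct (D (0%nat :: i :: u)) eqn:E0; destruct (D (1%nat :: i :: u)) eqn:E1.
      * rewrite E_up by auto. rewrite NXup, NX0, HVh.
        unfold RC. rewrite Ht, E0, E1. field. lra.
      * rewrite E_one by auto. rewrite NXdn, NX0, HVh by auto.
        unfold RC, tauv. rewrite ?(subtree_cons T 0 (i :: u)), ?(subtree_cons T 1 (i :: u)), Ht. cbv beta. rewrite veq_refl, V10, E0, E1. simpl.
        unfold tau_edge. field. lra.
      * rewrite E_one by auto. rewrite NXdn, NX0, HVh by auto.
        unfold RC, tauv. rewrite ?(subtree_cons T 0 (i :: u)), ?(subtree_cons T 1 (i :: u)), Ht. cbv beta. rewrite veq_refl, V01, E0, E1. simpl.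
        unfold tau_edge. field. lra.
      * rewrite E_two by auto. rewrite !NXdn, NX0, HVh by auto.
        unfold RC, tauv. rewrite (subtree_cons T 0 (i :: u)), (subtree_cons T 1 (i :: u)), Ht. cbv beta. rewrite !veq_refl, V01, V10, E0, E1. simpl.
        unfold tau_edge. field. split; [lra|]. unfold P2 in HP2. nra.
Qed.

End Step.

Section Bounds.
Variables (p : R) (T : btree) (e : vertex).
Hypothesis Hp : 0 < p <= 1.

Lemma tau_nonneg t : 0 <= tau p t.
Proof. pose proof (P2_pos p Hp) as H2. unfold P2 in H2.
  induction t; cbn [tau]; try lra.
  - assert (0 < 2 / p) by (apply Rdiv_lt_0_compat; lra). lra.
  - assert (0 < 3 / p) by (apply Rdiv_lt_0_compat; lra).
    assert (0 < 1 / (1 - (1 - p) ^ 2)) by (apply Rdiv_lt_0_compat; lra). lra. Qed.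

Lemma tau_edge_nonneg t : 0 <= tau_edge p t.
Proof. unfold tau_edge. pose proof (tau_nonneg t). assert (0 < 2 / p) by (apply Rdiv_lt_0_compat; lra). lra. Qed.

Lemma pil_range l r : 0 <= pil p l r <= 1.
Proof. unfold pil. pose proof (P2_pos p Hp) as H2. pose proof (alpha_range p l r).
  split. unfold Rdiv; apply Rmult_le_pos; [nra|left; apply Rinv_0_lt_compat; lra].
  apply Rmult_le_reg_r with (P2 p); auto. unfold Rdiv. rewrite Rmult_assoc, Rinv_l by lra.
  unfold P2. nra. Qed.

Lemma pir_range l r : 0 <= pir p l r <= 1.
Proof. unfold pir. pose proof (P2_pos p Hp) as H2. pose proof (alpha_range p l r).
  split. unfold Rdiv; apply Rmult_le_pos; [nra|left; apply Rinv_0_lt_compat; lra].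
  apply Rmult_le_reg_r with (P2 p); auto. unfold Rdiv. rewrite Rmult_assoc, Rinv_l by lra.
  unfold P2. nra. Qed.

Fixpoint HB (t : btree) : R :=
  match t with
  | Leaf => 0
  | Unary s => 1 / p + HB s
  | Binary l r => 1 / P2 p + tau_edge p l + tau_edge p r + HB l + HB r
  end.

Lemma inv_p_pos : 0 < 1 / p.
Proof. apply Rdiv_lt_0_compat; lra. Qed.
Lemma inv_P2_pos : 0 < 1 / P2 p.
Proof. apply Rdiv_lt_0_compat; [lra|apply P2_pos; auto]. Qed.

Lemma HB_nonneg t : 0 <= HB t.
Proof. pose proof inv_p_pos. pose proof inv_P2_pos.
  induction t; simpl; try lra. pose proof (tau_edge_nonneg t1). pose proof (tau_edge_nonneg t2). lra. Qed.

Lemma Hf_bounds t ps : 0 <= Hf p t ps <= HB t.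
Proof.
  pose proof inv_p_pos. pose proof inv_P2_pos.
  revert ps; induction t as [|s IH|l IHl r IHr]; intros ps; simpl.
  - lra.
  - destruct ps as [|[|k] rest]; try (pose proof (HB_nonneg s); lra). specialize (IH rest). lra.
  - pose proof (HB_nonneg l). pose proof (HB_nonneg r).
    pose proof (tau_edge_nonneg l). pose proof (tau_edge_nonneg r).
    pose proof (pil_range l r). pose proof (pir_range l r).
    destruct ps as [|[|[|k]] rest]; try lra.
    + specialize (IHl rest). assert (0 <= pir p l r * tau_edge p r <= tau_edge p r) by nra. lra.
    + specialize (IHr rest). assert (0 <= pil p l r * tau_edge p l <= tau_edge p l) by nra. lra.
Qed.

Lemma child_mono t k s : child t k = Some s -> tau p s <= tau p t /\ HB s <= HB t /\
  tau_edge p s <= tau p t.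
Proof.
  pose proof inv_p_pos. pose proof inv_P2_pos.
  destruct t as [|s0|l r]; cbn [child tau HB]; intros Hc; [discriminate| |].
  - destruct k; inversion Hc; subst. unfold tau_edge. pose proof (HB_nonneg s). lra.
  - pose proof (tau_nonneg l). pose proof (tau_nonneg r). pose proof (HB_nonneg l). pose proof (HB_nonneg r).
    pose proof (tau_edge_nonneg l). pose proof (tau_edge_nonneg r).
    unfold P2 in *. unfold tau_edge in *.
    assert (0 < 3 / p) by (apply Rdiv_lt_0_compat; lra).
    assert (1 / p + 2 / p = 3 / p) by (field; lra).
    destruct k as [|[|k]]; inversion Hc; subst; lra.
Qed.

Lemma subtree_mono ps t s : subtree_fwd t ps = Some s -> tau p s <= tau p t /\ HB s <= HB t.
Proof.
  revert t; induction ps as [|k ps IH]; intros t H.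
  - rewrite subtree_fwd_nil in H. inversion H; subst; lra.
  - rewrite subtree_fwd_cons in H. destruct (child t k) as [c|] eqn:Ec; [|discriminate].
    apply IH in H. apply child_mono in Ec. lra.
Qed.

Definition Kc := 1 / p + 1 / P2 p + tau p T + HB T.

Lemma RC_bounds D x : 0 <= RC p T D x <= tau p T.
Proof.
  pose proof (tau_nonneg T). unfold RC. destruct (subtree T x) as [t|] eqn:Ht; [|lra].
  unfold subtree in Ht. apply subtree_mono in Ht. pose proof (tau_nonneg t).
  destruct t as [|s|l r]; [lra| |].
  - pose proof (child_mono (Unary s) 0 s eq_refl). pose proof (tau_edge_nonneg s).
    destruct (D (0%nat :: x)); lra.
  - pose proof (child_mono (Binary l r) 0 l eq_refl). pose proof (child_mono (Binary l r) 1 r eq_refl).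
    pose proof (tau_edge_nonneg l). pose proof (tau_edge_nonneg r).
    destruct (D (0%nat :: x)), (D (1%nat :: x)); lra.
Qed.

Lemma Ahere_bounds D a : 0 <= Ahere p T e D a <= Kc.
Proof.
  pose proof inv_p_pos. pose proof inv_P2_pos. pose proof (HB_nonneg T). pose proof (tau_nonneg T).
  unfold Kc, Ahere. destruct (subtree T a) as [t|] eqn:Ht; [|lra].
  unfold subtree in Ht. apply subtree_mono in Ht.
  destruct t as [|s|l r]; [lra| |].
  - pose proof (child_mono (Unary s) 0 s eq_refl).
    destruct (skipn (length a) (rev e)) as [|[|k] rest]; try lra.
    pose proof (Hf_bounds s rest). lra.
  - pose proof (child_mono (Binary l r) 0 l eq_refl). pose proof (child_mono (Binary l r) 1 r eq_refl).
    pose proof (tau_edge_nonneg l). pose proof (tau_edge_nonneg r).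
    pose proof (pil_range l r). pose proof (pir_range l r).
    destruct (skipn (length a) (rev e)) as [|[|[|k]] rest]; try lra.
    + pose proof (Hf_bounds l rest). assert (0 <= pir p l r * tau_edge p r <= tau_edge p r) by nra.
      destruct (D (1%nat :: a)); lra.
    + pose proof (Hf_bounds r rest). assert (0 <= pil p l r * tau_edge p l <= tau_edge p l) by nra.
      destruct (D (0%nat :: a)); lra.
Qed.

Lemma Vup_bounds D v : 0 <= Vup p T e D v <= INR (length v) * (tau p T + 1 / p) + Kc.
Proof.
  pose proof inv_p_pos. pose proof (tau_nonneg T).
  induction v as [|i u IH]; simpl Vup.
  - destruct (is_sfx [] (tl e)); pose proof (Ahere_bounds D []); simpl; lra.
  - rewrite length_cons, S_INR. destruct (is_sfx (i :: u) (tl e)).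
    + pose proof (Ahere_bounds D (i :: u)). pose proof (pos_INR (length u)). nra.
    + pose proof (RC_bounds D (i :: u)). lra.
Qed.

Fixpoint height (t : btree) : nat :=
  match t with Leaf => 0 | Unary s => S (height s) | Binary l r => S (Nat.max (height l) (height r)) end.

Lemma height_sub t ps s : subtree_fwd t ps = Some s -> (length ps <= height t)%nat.
Proof.
  revert t; induction ps as [|k ps IH]; intros t H; simpl; [lia|].
  rewrite subtree_fwd_cons in H. destruct (child t k) as [c|] eqn:Ec; [|discriminate].
  apply IH in H. destruct t as [|s0|l r]; simpl in Ec; [discriminate| |].
  - destruct k; inversion Ec; subst. simpl. lia.
  - destruct k as [|[|k]]; inversion Ec; subst; simpl; lia.
Qed.

Definition Mb := INR (height T) * (tau p T + 1 / p) + Kc.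

Lemma V_bounds h : Inv T h -> 0 <= V p T e h <= Mb.
Proof.
  intros [[t Ht] _]. unfold V, Mb. pose proof (Vup_bounds (Dh h) (Defs.pos h)).
  unfold subtree in Ht. apply height_sub in Ht. rewrite length_rev in Ht.
  apply le_INR in Ht. pose proof inv_p_pos. pose proof (tau_nonneg T). nra.
Qed.

Lemma V_nil : V p T e [] = Hf p T (rev e).
Proof. unfold V. simpl Defs.pos. rewrite Vup_A by apply is_sfx_nil.
  rewrite (Ahere_fresh p T e _ [] T); auto. apply subtree_nil. Qed.

End Bounds.

Section Alg.
Variables (p : R).
Hypothesis Hp : 0 < p <= 1.

Definition xa (l r : btree) : R :=
  / 2 + (Lambda p l - Lambda p r) / (tau_edge p l + tau_edge p r) * ((1 - (1 - p) ^ 2) / p ^ 2).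

Fixpoint UC (t : btree) : Prop :=
  match t with
  | Leaf => True
  | Unary s => UC s
  | Binary l r => UC l /\ UC r /\ 0 <= xa l r <= 1
  end.

Lemma alpha_uc l r : 0 <= xa l r <= 1 -> alpha p l r = xa l r.
Proof. intros H. unfold alpha, proj01. fold (xa l r). unfold Rmax, Rmin.
  destruct (Rle_dec 1 (xa l r)); destruct (Rle_dec 0 _); lra. Qed.

Lemma ab_pos l r : 0 < tau_edge p l + tau_edge p r.
Proof. unfold tau_edge. pose proof (tau_nonneg p Hp l). pose proof (tau_nonneg p Hp r).
  assert (0 < 2 / p) by (apply Rdiv_lt_0_compat; lra). lra. Qed.

Lemma bin_id_l l r : 0 <= xa l r <= 1 ->
  1 / P2 p + pir p l r * tau_edge p r + (/ 2 * tau p l + Lambda p l) =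
  / 2 * tau p (Binary l r) + Lambda p (Binary l r).
Proof.
  intros H. pose proof (ab_pos l r). pose proof (P2_pos p Hp) as H2.
  unfold pir. rewrite alpha_uc by auto. unfold xa, P2 in *. cbn [tau Lambda].
  unfold tau_edge in *. pose proof (tau_nonneg p Hp l); pose proof (tau_nonneg p Hp r). field. repeat split; try lra; nra.
Qed.

Lemma bin_id_r l r : 0 <= xa l r <= 1 ->
  1 / P2 p + pil p l r * tau_edge p l + (/ 2 * tau p r + Lambda p r) =
  / 2 * tau p (Binary l r) + Lambda p (Binary l r).
Proof.
  intros H. pose proof (ab_pos l r). pose proof (P2_pos p Hp) as H2.
  unfold pil. rewrite alpha_uc by auto. unfold xa, P2 in *. cbn [tau Lambda].
  unfold tau_edge in *. pose proof (tau_nonneg p Hp l); pose proof (tau_nonneg p Hp r). field. repeat split; try lra; nra.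
Qed.

Lemma Hf_leaf t ps : UC t -> subtree_fwd t ps = Some Leaf -> Hf p t ps = / 2 * tau p t + Lambda p t.
Proof.
  revert ps; induction t as [|s IH|l IHl r IHr]; intros ps HU Hs.
  - destruct ps; [simpl; lra|discriminate].
  - destruct ps as [|[|k] rest]; [discriminate| |discriminate].
    simpl in Hs. cbn [Hf tau Lambda]. rewrite IH; auto. field. lra.
  - destruct HU as [HUl [HUr Hx]].
    destruct ps as [|[|[|k]] rest]; [discriminate| | |discriminate]; simpl in Hs; cbn [Hf].
    + rewrite IHl by auto. apply bin_id_l; auto.
    + rewrite IHr by auto. apply bin_id_r; auto.
Qed.

Lemma half_nonneg t : UC t -> 0 <= / 2 * tau p t + Lambda p t.
Proof.
  induction t as [|s IH|l IHl r IHr]; intros HU.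
  - simpl; lra.
  - cbn [tau Lambda]. assert (0 < 1 / p) by (apply Rdiv_lt_0_compat; lra). specialize (IH HU).
    assert (/ 2 * (tau p s + 2 / p) + Lambda p s = / 2 * tau p s + Lambda p s + 1 / p) by (field; lra). lra.
  - destruct HU as [HUl [HUr Hx]]. rewrite <- (bin_id_l l r Hx).
    pose proof (pir_range p Hp l r). pose proof (tau_edge_nonneg p Hp r).
    pose proof (inv_P2_pos p Hp). specialize (IHl HUl). nra.
Qed.

Lemma Hf_le t ps : UC t -> Hf p t ps <= / 2 * tau p t + Lambda p t.
Proof.
  revert ps; induction t as [|s IH|l IHl r IHr]; intros ps HU.
  - simpl; lra.
  - pose proof (half_nonneg (Unary s) HU).
    destruct ps as [|[|k] rest]; cbn [Hf]; try lra.
    specialize (IH rest HU). cbn [tau Lambda].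
    assert (/ 2 * (tau p s + 2 / p) + Lambda p s = / 2 * tau p s + Lambda p s + 1 / p) by (field; lra). lra.
  - pose proof (half_nonneg (Binary l r) HU). destruct HU as [HUl [HUr Hx]].
    destruct ps as [|[|[|k]] rest]; cbn [Hf]; try lra.
    + rewrite <- (bin_id_l l r Hx). specialize (IHl rest HUl). lra.
    + rewrite <- (bin_id_r l r Hx). specialize (IHr rest HUr). lra.
Qed.

Fixpoint nb (t : btree) : nat :=
  match t with Leaf => 0 | Unary s => nb s | Binary l r => S (nb l + nb r) end.

Definition cc := (1 - p) / (1 - (1 - p) ^ 2).

Lemma Lam_bounds t : - INR (nb t) * cc <= Lambda p t <= 0.
Proof.
  pose proof (P2_pos p Hp) as H2. unfold P2 in H2.
  assert (Hc : 0 <= cc) by (unfold cc; apply Rmult_le_pos; [lra|left; apply Rinv_0_lt_compat; lra]).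
  induction t as [|s IH|l IHl r IHr]; cbn [Lambda nb].
  - simpl. lra.
  - auto.
  - pose proof (ab_pos l r). set (a := tau_edge p l) in *. set (b := tau_edge p r) in *.
    assert (Ha : 0 <= a) by apply tau_edge_nonneg, Hp.
    assert (Hb : 0 <= b) by apply tau_edge_nonneg, Hp.
    set (wa := a / (a + b)). set (wb := b / (a + b)).
    assert (Hw : wa + wb = 1) by (unfold wa, wb; field; lra).
    assert (Hwa : 0 <= wa) by (unfold wa; apply Rmult_le_pos; [lra|left; apply Rinv_0_lt_compat; lra]).
    assert (Hwb : 0 <= wb) by (unfold wb; apply Rmult_le_pos; [lra|left; apply Rinv_0_lt_compat; lra]).
    assert (Ex : / 2 * (1 / (1 - (1 - p) ^ 2) - 1 / p) = - / 2 * cc) by (unfold cc; field; lra).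
    rewrite Ex. rewrite S_INR, plus_INR.
    pose proof (pos_INR (nb l)). pose proof (pos_INR (nb r)).
    assert (L1 : - INR (nb l) * cc <= wa * Lambda p l) by nra.
    assert (L2 : - INR (nb r) * cc <= wb * Lambda p r) by nra.
    assert (L3 : wa * Lambda p l <= 0) by nra.
    assert (L4 : wb * Lambda p r <= 0) by nra.
    nra.
Qed.

Definition p0 (N : nat) := 1 - 1 / (2 * (INR N + 1)).

Lemma p0_range N : 1 / 2 <= p0 N < 1.
Proof. unfold p0. pose proof (pos_INR N).
  assert (0 < 1 / (2 * (INR N + 1))) by (apply Rdiv_lt_0_compat; lra).
  assert (1 / (2 * (INR N + 1)) <= 1 / 2).
  { apply Rmult_le_reg_r with (2 * (INR N + 1)); [lra|]. field_simplify; lra. }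
  lra. Qed.

Lemma UC_all N t : (nb t <= N)%nat -> p0 N <= p -> UC t.
Proof.
  intros HN Hp0. pose proof (p0_range N).
  induction t as [|s IH|l IHl r IHr]; cbn [UC nb] in *; auto.
  split; [apply IHl; lia|split; [apply IHr; lia|]].
  pose proof (P2_pos p Hp) as H2. unfold P2 in H2.
  pose proof (ab_pos l r).
  pose proof (Lam_bounds l). pose proof (Lam_bounds r).
  assert (HNl : INR (nb l) <= INR N) by (apply le_INR; lia).
  assert (HNr : INR (nb r) <= INR N) by (apply le_INR; lia).
  assert (Hc : 0 <= cc) by (unfold cc; apply Rmult_le_pos; [lra|left; apply Rinv_0_lt_compat; lra]).
  set (Dd := Lambda p l - Lambda p r).
  assert (HD : - INR N * cc <= Dd <= INR N * cc) by (unfold Dd; nra).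
  set (P := 1 - (1 - p) ^ 2) in *.
  assert (HcP : cc * P = 1 - p) by (unfold cc, P in *; field; lra).
  set (Y := Dd * P). set (Z := p ^ 2 * (tau_edge p l + tau_edge p r)).
  assert (HY : - (INR N * (1 - p)) <= Y <= INR N * (1 - p)) by (unfold Y; rewrite <- HcP; nra).
  assert (Hq : INR N * (1 - p) <= 1 / 2).
  { unfold p0 in Hp0. pose proof (pos_INR N).
    assert (1 - p <= 1 / (2 * (INR N + 1))) by lra.
    assert (INR N * (1 - p) <= INR N * (1 / (2 * (INR N + 1)))) by (apply Rmult_le_compat_l; lra).
    assert (INR N * (1 / (2 * (INR N + 1))) <= 1 / 2).
    { apply Rmult_le_reg_r with (2 * (INR N + 1)); [lra|]. field_simplify; lra. }
    lra. }
  assert (HZ : 4 * p <= Z).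
  { unfold Z, tau_edge. pose proof (tau_nonneg p Hp l). pose proof (tau_nonneg p Hp r).
    replace (p ^ 2 * (tau p l + 2 / p + (tau p r + 2 / p))) with (p ^ 2 * (tau p l + tau p r) + 4 * p)
      by (field; lra). nra. }
  assert (Ex : xa l r = / 2 + Y / Z) by (unfold xa, Y, Z, Dd, P; field; lra).
  rewrite Ex.
  assert (HZp : 0 < Z) by lra.
  assert (-(Z/2) <= Y <= Z / 2) by lra.
  split.
  - assert (- / 2 <= Y / Z). { apply Rmult_le_reg_r with Z; auto. unfold Rdiv. rewrite Rmult_assoc, Rinv_l by lra. lra. }
    lra.
  - assert (Y / Z <= / 2). { apply Rmult_le_reg_r with Z; auto. unfold Rdiv. rewrite Rmult_assoc, Rinv_l by lra. lra. }
    lra.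
Qed.

End Alg.

Lemma sigma_legal p T h c q a : In (q, a) (sigma_alpha p T h c) ->
  0 <= q /\
  (a = None \/
   (exists k, a = Some (k :: Defs.pos h) /\ In (k :: Defs.pos h) (edges T) /\ In (k :: Defs.pos h) c) \/
   (exists i u, Defs.pos h = i :: u /\ a = Some u /\ In (i :: u) c)).
Proof.
  unfold sigma_alpha. cbv zeta.
  remember (filter (fun w => memb w (edges T)) [0%nat :: Defs.pos h; 1%nat :: Defs.pos h]) as out eqn:Eo.
  remember (filter (fun w => negb (traversed T h w)) out) as untr eqn:Eu.
  remember (filter (fun w => memb w c) untr) as act eqn:Ea.
  assert (HA : forall w, In w act -> exists k, w = k :: Defs.pos h /\ In w (edges T) /\ In w c).
  { intros w Hw. subst act untr out. apply filter_In in Hw. destruct Hw as [Hw Hc].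
    apply filter_In in Hw. destruct Hw as [Hw _]. apply filter_In in Hw. destruct Hw as [Hw He].
    apply memb_In in Hc. apply memb_In in He.
    destruct Hw as [<-|[<-|[]]]; eauto. }
  clear Ea. intros H.
  destruct act as [|w1 [|w2 [|w3 rest]]].
  - destruct untr.
    + destruct (Defs.pos h) as [|i u] eqn:Ev.
      * destruct H as [H|[]]. inversion H; subst. split; [lra|auto].
      * destruct (memb (i :: u) c) eqn:Em; destruct H as [H|[]]; inversion H; subst; split; try lra; auto.
        right; right. exists i, u. apply memb_In in Em. auto.
    + destruct H as [H|[]]. inversion H; subst. split; [lra|auto].
  - destruct H as [H|[]]. inversion H; subst. split; [lra|]. right; left.
    destruct (HA w1 (or_introl eq_refl)) as [k [-> Hk]]. eauto.
  - assert (Hal : 0 <= match subtree T (Defs.pos h) with Some (Binary l r) => alpha p l r | _ => / 2 end <= 1).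
    { destruct (subtree T (Defs.pos h)) as [[| |l r]|]; try lra. apply alpha_range. }
    destruct H as [H|[H|[]]]; inversion H; subst; (split; [lra|]); right; left.
    + destruct (HA w1 (or_introl eq_refl)) as [k [-> Hk]]. eauto.
    + destruct (HA w2 (or_intror (or_introl eq_refl))) as [k [-> Hk]]. eauto.
  - destruct H as [H|[]]. inversion H; subst. split; [lra|auto].
Qed.

Lemma sigma_sum p T h c : sumR (map fst (sigma_alpha p T h c)) = 1.
Proof.
  unfold sigma_alpha. cbv zeta.
  destruct (filter (fun w => memb w c) _) as [|w1 [|w2 [|w3 rest]]]; simpl; try lra.
  destruct (filter _ _); simpl; try lra. destruct (Defs.pos h); simpl; try lra.
  destruct (memb _ c); simpl; lra.
Qed.

Definition okv (T : btree) (v : vertex) : bool :=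
  match v with [] => true | _ => memb v (edges T) end.

Definition sigma' (p : R) (T : btree) : strategy :=
  fun h c => if okv T (Defs.pos h) then sigma_alpha p T h c else [(1, None)].

Lemma sigma'_valid p T : valid_strategy T (sigma' p T).
Proof.
  intros h c. unfold sigma'. destruct (okv T (Defs.pos h)) eqn:Ok.
  - split; [|apply sigma_sum]. intros q a H.
    destruct (sigma_legal p T h c q a H) as [Hq [->|[[k [-> [H1 H2]]]|[i [u [Hv [-> H2]]]]]]].
    + split; simpl; auto.
    + split; auto. simpl. left. exists k. auto.
    + split; auto. simpl. right. exists i. rewrite Hv. split; auto. split; auto.
      unfold okv in Ok. rewrite Hv in Ok. apply memb_In; auto.
  - split; [|simpl; lra]. intros q a [H|[]]. inversion H; subst. split; [lra|simpl; auto].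
Qed.

Lemma sigma'_agree p T h c : Inv T h -> sigma' p T h c = sigma_alpha p T h c.
Proof.
  intros [[t Ht] _]. unfold sigma'. unfold okv. destruct (Defs.pos h) as [|i u] eqn:Ev; auto.
  replace (memb (i :: u) (edges T)) with true; auto. symmetry. apply memb_In.
  eapply vertex_edge; eauto.
Qed.

Theorem exp_time p T e s : 0 < p <= 1 -> In e (edges T) ->
  (forall h c, Inv T h -> s h c = sigma_alpha p T h c) ->
  expected_time_is p T s e (Hf p T (rev e)).
Proof.
  intros Hp He Hs. rewrite <- (V_nil p T e).
  apply (telescope p T s e (V p T e) (Inv T) (Mb p T)).
  - lra.
  - apply Inv_nil.
  - intros h c q a HI H. rewrite Hs in H by auto. eapply sigma_pres; eauto.
  - intros h c q a HI H. rewrite Hs in H by auto. eapply sigma_actions; eauto.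
  - intros h HI. apply V_bounds; auto.
  - intros h HI Hne. rewrite (step p T e Hp He h HI Hne). f_equal.
    apply sumR_map_ext. intros c _. rewrite Hs; auto.
Qed.

Theorem mainTheorem8 (T : btree) :
  exists p0 : R, 0 < p0 < 1 /\
    forall p : R, p0 <= p <= 1 ->
      (forall e : vertex, is_leaf_edge T e ->
         expected_time_is p T (sigma_alpha p T) e (/ 2 * tau p T + Lambda p T))
      /\ upper_value_le p T (/ 2 * tau p T + Lambda p T).
Proof.
  exists (p0 (nb T)). pose proof (p0_range (nb T)) as Hr. split; [lra|].
  intros p [Hp0 Hp1]. assert (Hp : 0 < p <= 1) by lra.
  assert (HU : UC p T) by (apply (UC_all p Hp (nb T)); auto).
  split.
  - intros e [He Hleaf].
    assert (Hs : subtree T e = Some Leaf).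
    { destruct (subtree_edge T e He) as [s Hs]. destruct s as [|s|l r]; auto; exfalso;
      apply (Hleaf 0%nat); apply (In_child T e _ 0 Hs); simpl; congruence. }
    rewrite <- (Hf_leaf p Hp T (rev e)) by auto.
    apply exp_time; auto.
  - intros eps Heps. exists (sigma' p T). split; [apply sigma'_valid|].
    intros e He. exists (Hf p T (rev e)). split.
    + apply exp_time; auto. intros h c HI. apply sigma'_agree; auto.
    + pose proof (Hf_le p Hp T (rev e) HU). lra.
Qed.
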